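(* Let $\mathcal{G}$ be a simple undirected graph on $N$ vertices with no isolated vertices, with adjacency matrix $\mathbf{A}\in\{0,1\}^{N\times N}$ and degree matrix $\mathbf{D}=\operatorname{diag}(\mathbf{A}\mathbf{1})$. Let $\lambda$ be an eigenvalue of $$\mathbf{L}=\mathbf{D}^{-1/2}\mathbf{A}\mathbf{D}^{-1/2}-\operatorname{diag}\big(\mathbf{D}^{-1/2}\mathbf{A}\mathbf{D}^{-1/2}\mathbf{1}\big).$$ Then $|\lambda|\le 2\sqrt{N}$.
   Context: For a vector $\mathbf{w}$, $\operatorname{diag}(\mathbf{w})$ is the diagonal matrix with diagonal $\mathbf{w}$; $\mathbf{1}$ is the all-ones vector. *)

(* Defs.v *)
From mathcomp Require Import all_boot all_order all_algebra all_field.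
Set Implicit Arguments. Unset Strict Implicit. Unset Printing Implicit Defensive.
Import Order.TTheory GRing.Theory Num.Theory.
Local Open Scope ring_scope.

Definition simple_graph (N : nat) (e : rel 'I_N) :=
  symmetric e /\ irreflexive e.

Definition no_isolated (N : nat) (e : rel 'I_N) :=
  forall i : 'I_N, exists j : 'I_N, e i j.

Definition adjmx (N : nat) (e : rel 'I_N) : 'M[algC]_N :=
  \matrix_(i, j) (e i j)%:R.

Definition ones (N : nat) : 'cV[algC]_N := const_mx 1.

Definition degmx (N : nat) (e : rel 'I_N) : 'M[algC]_N :=
  diag_mx (adjmx e *m ones N)^T.

Definition degmx_invsqrt (N : nat) (e : rel 'I_N) : 'M[algC]_N :=
  diag_mx (\row_i (sqrtC ((adjmx e *m ones N) i ord0))^-1).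

Definition Lmx (N : nat) (e : rel 'I_N) : 'M[algC]_N :=
  let S := degmx_invsqrt e *m adjmx e *m degmx_invsqrt e in
  S - diag_mx (S *m ones N)^T.

(* Main.v *)
Require Import Defs.
From mathcomp Require Import all_boot all_order all_algebra all_field.
Import Order.TTheory GRing.Theory Num.Theory.
Local Open Scope ring_scope.

Lemma degE {N : nat} {e : rel 'I_N} i :
  (adjmx e *m ones N) i ord0 = (\sum_k (e i k : nat))%N%:R.
Proof.
rewrite mxE natr_sum; apply: eq_bigr => k _; rewrite !mxE mulr1.
by case: (e i k).
Qed.

Lemma deg_bounds {N : nat} {e : rel 'I_N} i :
  no_isolated e -> (1 <= \sum_k (e i k : nat) <= N)%N.
Proof.
move=> /(_ i) [j eij]; apply/andP; split.
  by rewrite (bigD1 j) //= eij.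
rewrite -[X in (_ <= X)%N]card_ord -sum1_card.
by apply: leq_sum => k _; case: (e i k).
Qed.

Lemma sqrt_deg_ge1 {N : nat} {e : rel 'I_N} i :
  no_isolated e -> 1 <= sqrtC ((adjmx e *m ones N) i ord0).
Proof.
move=> ni; rewrite degE -{1}sqrtC1 ler_sqrtC ?nnegrE ?ler0n // ler1n.


by case/andP: (deg_bounds i ni).
Qed.

Lemma sqrt_deg_leN {N : nat} {e : rel 'I_N} i :
  no_isolated e -> sqrtC ((adjmx e *m ones N) i ord0) <= sqrtC N%:R.
Proof.
move=> ni; rewrite degE ler_sqrtC ?nnegrE ?ler0n // ler_nat.


by case/andP: (deg_bounds i ni).
Qed.

Theorem proposition8 (N : nat) (e : rel 'I_N) (lambda : algC) :
  simple_graph e -> no_isolated e ->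
  eigenvalue (Lmx e) lambda ->
  `|lambda| <= 2 * sqrtC (N%:R).
Proof.
move=> _ ni /eigenvalueP [v vL vnz].
set d := fun i => (adjmx e *m ones N) i ord0.
set a := fun i => (sqrtC (d i))^-1.
have s1 i : 1 <= sqrtC (d i) by exact: sqrt_deg_ge1.
have s0 i : 0 < sqrtC (d i) by apply: lt_le_trans (s1 i).
have a0 i : 0 <= a i by rewrite invr_ge0 ltW.
have a1 i : a i <= 1 by rewrite invf_le1.
have Sij i j : (degmx_invsqrt e *m adjmx e *m degmx_invsqrt e) i j
    = a i * (e i j)%:R * a j.
  by rewrite /degmx_invsqrt mul_mx_diag mul_diag_mx !mxE /a /d !mxE.
have Sn i j : `|(degmx_invsqrt e *m adjmx e *m degmx_invsqrt e) i j|
    <= a i * (e i j)%:R.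
  rewrite Sij ger0_norm; last by rewrite !mulr_ge0 ?ler0n.
  by rewrite ler_piMr // mulr_ge0 ?ler0n.
have Ssum i : \sum_j `|(degmx_invsqrt e *m adjmx e *m degmx_invsqrt e) i j|
    <= sqrtC N%:R.
  apply: le_trans (sqrt_deg_leN i ni).
  apply: le_trans (ler_sum _ (fun j _ => Sn i j)) _.
  rewrite -mulr_sumr.
  have -> : \sum_j ((e i j)%:R : algC) = d i.
    by rewrite /d mxE; apply: eq_bigr => k _; rewrite !mxE mulr1.
  rewrite /a -{2}(sqrtCK (d i)) expr2 mulrA mulVf ?mul1r //.
  by rewrite gt_eqF.
have Lrow i : \sum_j `|Lmx e i j| <= 2 * sqrtC N%:R.
  set S := degmx_invsqrt e *m adjmx e *m degmx_invsqrt e.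
  have LE j : Lmx e i j = S i j - (\sum_k S i k) *+ (i == j).
    rewrite /Lmx -/S !mxE; congr (_ - _ *+ _).
    by apply: eq_bigr => k _; rewrite !mxE mulr1.
  apply: le_trans (_ : \sum_j `|S i j| + `|\sum_k S i k| <= _).
    under eq_bigr => j _ do rewrite LE.
    apply: le_trans (ler_sum _ (fun j _ => ler_normB (S i j) ((\sum_k S i k) *+ (i == j)))) _.
    rewrite big_split /= lerD2l.
    rewrite (bigD1 i) //= eqxx mulr1n [X in _ + X]big1 ?addr0 //.
    by move=> j /negbTE; rewrite eq_sym => ->; rewrite mulr0n normr0.
  rewrite mulr2n mulrDl mul1r lerD ?Ssum //.
  exact: le_trans (ler_norm_sum _ _ _) (Ssum i).
have vpos : 0 < \sum_j `|v 0 j|.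
  rewrite lt_def sumr_ge0 ?andbT; last by move=> j _; rewrite normr_ge0.
  apply: contra vnz => /eqP s0'; apply/eqP/matrixP => i j.
  rewrite !mxE (ord1 i); apply/eqP; rewrite -normr_eq0; apply/eqP.
  by apply/eqP; move: s0' => /eqP; rewrite psumr_eq0 => [/allP/(_ j)|]; 
    [rewrite mem_index_enum => /(_ isT) /implyP /(_ isT) | move=> k _; rewrite normr_ge0].
rewrite -(ler_pM2r vpos) mulr_sumr.
have step j : `|lambda| * `|v 0 j| <= \sum_i `|v 0 i| * `|Lmx e i j|.
  rewrite -normrM.
  have -> : lambda * v 0 j = (v *m Lmx e) 0 j by rewrite vL !mxE.
  rewrite mxE; apply: le_trans (ler_norm_sum _ _ _) _.
  by apply: ler_sum => i _; rewrite normrM.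
apply: le_trans (ler_sum _ (fun j _ => step j)) _.
rewrite exchange_big /= mulr_sumr; apply: ler_sum => i _.
rewrite -mulr_sumr mulrC; apply: ler_wpM2r; first exact: normr_ge0.
exact: Lrow.
Qed.
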